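(* Suppose $\mu(f)<0$ and for some $\delta\in(0,1]$ and every $x\in E$ \[\bar{\gamma}(x)=\sup_{\tau} \liminf_{T \to \infty} \mathbb{E}^x \Big\{(1-\delta)\mu(f)(\tau \wedge T)-q(X_{\tau \wedge T}) \Big\} < \infty,\] where the supremum is over stopping times $\tau$. Then for every $x\in E$, with $d(x)=\delta\mu(f)<0$, \[ \gamma (x) = \sup_{\tau} \liminf_{T \to \infty} \mathbb{E}^x \Big\{ \int_0^{\tau \wedge T} \big(f(X_s) - d(x)\big) ds \Big\} < \infty. \]
   Context: Let $(X_t)$ be a Feller–Markov process on $(\Omega,F,(F_t))$ with values in a locally compact metric space $E$ with Borel $\sigma$-field, with laws $\mathbb{P}^x$ and expectations $\mathbb{E}^x$ when started at $x$, and transition semigroup $P_t$. Assume (A1) weak Feller property: $P_t\,\mathcal{C}_0\subseteq\mathcal{C}_0$, where $\mathcal{C}_0$ is the space of continuous bounded functions on $E$ vanishing at infinity; and (A2): there is a unique probability measure $\mu$ on $E$, a function $K:E\to(0,\infty)$ bounded on compacts and $h:[0,\infty)\to\mathbb{R}_+$ with $\int_0^\infty h(t)dt<\infty$ such that $\|P_t(x,\cdot)-\mu(\cdot)\|_{TV}\le K(x)h(t)$ for all $x$, and $\mathbb{E}^x\{K(X_T)\}<\infty$ for each $T\ge0$. Let $f$ be a continuous bounded function, $\mu(f)=\int_E f\,d\mu$, and let $q(x)=\mathbb{E}^x\{\int_0^\infty (f(X_t)-\mu(f))dt\}$ be the centred zero-potential of $f$; under (A1)–(A2), $q$ is continuous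 and for any bounded stopping time $\tau$, $q(x)=\mathbb{E}^x\{\int_0^\tau(f(X_t)-\mu(f))dt+q(X_\tau)\}$. *)

(* Defs.v *)
From HB Require Import structures.
From mathcomp Require Import all_boot all_order all_algebra.
From mathcomp Require Import all_classical all_reals all_analysis measurable_realfun.

Set Implicit Arguments.
Unset Strict Implicit.
Unset Printing Implicit Defensive.

Import Order.TTheory GRing.Theory Num.Theory.
Import numFieldNormedType.Exports.

Local Open Scope classical_set_scope.
Local Open Scope ring_scope.

(* Metric spaces with a distinguished point (needed by MathComp-Analysis to
   build a measurable type on E; E is nonempty anyway since it carries the
   probability measure mu). *)
#[short(type="pmetricType")]
HB.structure Definition PointedMetric (K : numDomainType) :=
  { M of Pointed M & Metric K M }.

Definition borelE {R : realType} (E : pmetricType R)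
  : measurableType (sigma_display (@open E)) :=
  [the measurableType _ of g_sigma_algebraType (@open E)].

Section FellerMarkov.
Context {R : realType} {E : pmetricType R}.
Context {dO : measure_display} {Omega : measurableType dO}.

Definition C0 (g : E -> R) : Prop :=
  [/\ continuous g,
      exists M : R, forall x, `|g x| <= M &
      forall eps : R, 0 < eps ->
        exists C : set E, compact C /\ forall x, ~ C x -> `|g x| < eps].

Definition Cb (g : E -> R) : Prop :=
  continuous g /\ exists M : R, forall x, `|g x| <= M.

Definition filtration (F : R -> set (set Omega)) : Prop :=
  [/\ forall t, 0 <= t -> sigma_algebra setT (F t),
      forall t, 0 <= t -> F t `<=` measurable &
      forall s t, 0 <= s -> s <= t -> F s `<=` F t].

Definition stopping_time (F : R -> set (set Omega)) (tau : Omega -> \bar R) : Prop :=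
  (forall w, 0 <= tau w)%E /\
  forall t, 0 <= t -> F t [set w | (tau w <= t%:E)%E].

Definition stopT (tau : Omega -> \bar R) (T : R) (w : Omega) : R :=
  fine (Order.min (tau w) T%:E).

Definition markov_process (F : R -> set (set Omega))
    (P : E -> probability Omega R) (X : R -> Omega -> E)
    (Pt : R -> E -> probability (borelE E) R) : Prop :=
  filtration F /\
      (forall t (A : set (borelE E)), 0 <= t -> measurable A -> F t (X t @^-1` A)) /\
      measurable_fun [set p : R * Omega | 0 <= p.1]
        (fun p : R * Omega => (X p.1 p.2 : borelE E)) /\
      (forall w t, 0 <= t -> (fun s => X s w) @ t^'+ --> X t w) /\
      (forall x, P x [set w | X 0 w = x] = 1%E) /\
      (forall t x (A : set (borelE E)), 0 <= t -> measurable A ->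
        Pt t x A = P x (X t @^-1` A)) /\
      (forall t (A : set (borelE E)), 0 <= t -> measurable A ->
        measurable_fun setT (fun x : borelE E => (Pt t x A : \bar R))) /\
      forall x s t (A : set (borelE E)) (G : set Omega),
        0 <= s -> 0 <= t -> measurable A -> F s G ->
        P x (G `&` X (s + t) @^-1` A) = (\int[P x]_(w in G) Pt t (X s w) A)%E.

Definition semigroup (Pt : R -> E -> probability (borelE E) R)
    (t : R) (g : E -> R) (x : E) : R :=
  fine (\int[Pt t x]_y (g y)%:E).

Definition weak_feller (Pt : R -> E -> probability (borelE E) R) : Prop :=
  forall t (g : E -> R), 0 <= t -> C0 g -> C0 (semigroup Pt t g).

Definition TVdist (m1 m2 : probability (borelE E) R) : \bar R :=
  ereal_sup [set `|(m1 A - m2 A)%E|%E | A in @measurable _ (borelE E)].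

Definition A2 (P : E -> probability Omega R) (X : R -> Omega -> E)
    (Pt : R -> E -> probability (borelE E) R)
    (mu : probability (borelE E) R) (K : E -> R) (h : R -> R) : Prop :=
  (forall x, 0 < K x) /\
  (forall C : set E, compact C -> exists M : R, forall x, C x -> K x <= M) /\
  (forall t, 0 <= t -> 0 <= h t) /\
  (lebesgue_measure : measure _ R).-integrable `[0%R, +oo[ (fun t => (h t)%:E) /\
  (forall x t, 0 <= t -> (TVdist (Pt t x) mu <= (K x * h t)%:E)%E) /\
  (forall nu : probability (borelE E) R,
     (forall x t, 0 <= t -> (TVdist (Pt t x) nu <= (K x * h t)%:E)%E) -> nu = mu) /\
  (forall x T, 0 <= T -> (\int[P x]_w (K (X T w))%:E < +oo)%E).

Definition mean (mu : probability (borelE E) R) (f : E -> R) : R :=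
  fine (\int[mu]_y (f y)%:E).

(* centred zero-potential q(x) = int_0^oo (P_t f(x) - mu(f)) dt
   (= E^x int_0^oo (f(X_t) - mu(f)) dt, by Fubini) *)
Definition zero_potential (Pt : R -> E -> probability (borelE E) R)
    (mu : probability (borelE E) R) (f : E -> R) (x : E) : R :=
  fine (\int[lebesgue_measure]_(t in `[0%R, +oo[)
          (semigroup Pt t f x - mean mu f)%:E).

(* the facts on q recalled in the context (consequences of (A1)-(A2)):
   q is continuous and, for every bounded stopping time tau,
   q(x) = E^x { int_0^tau (f(X_t) - mu(f)) dt + q(X_tau) }. *)
Definition zero_potential_facts (F : R -> set (set Omega))
    (P : E -> probability Omega R) (X : R -> Omega -> E)
    (Pt : R -> E -> probability (borelE E) R)
    (mu : probability (borelE E) R) (f : E -> R) : Prop :=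
  let q := zero_potential Pt mu f in
  continuous q /\
  forall x (tau : Omega -> \bar R), stopping_time F tau ->
    (exists T : R, forall w, (tau w <= T%:E)%E) ->
    (q x)%:E = (\int[P x]_w
       ((\int[lebesgue_measure]_(s in `[0%R, fine (tau w)])
            (f (X s w) - mean mu f)%:E)
        + (q (X (fine (tau w)) w))%:E))%E.

Definition gamma_bar (F : R -> set (set Omega))
    (P : E -> probability Omega R) (X : R -> Omega -> E)
    (Pt : R -> E -> probability (borelE E) R)
    (mu : probability (borelE E) R) (f : E -> R) (delta : R) (x : E) : \bar R :=
  ereal_sup [set limf_einf
      (fun T : R => (\int[P x]_w
          ((1 - delta) * mean mu f * stopT tau T w
             - zero_potential Pt mu f (X (stopT tau T w) w))%:E)%E)
      (pinfty_nbhs R)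
    | tau in stopping_time F].

Definition gamma (F : R -> set (set Omega))
    (P : E -> probability Omega R) (X : R -> Omega -> E)
    (f : E -> R) (d : R) (x : E) : \bar R :=
  ereal_sup [set limf_einf
      (fun T : R => (\int[P x]_w
          (\int[lebesgue_measure]_(s in `[0%R, stopT tau T w])
             (f (X s w) - d)%:E))%E)
      (pinfty_nbhs R)
    | tau in stopping_time F].

End FellerMarkov.

(* Main.v *)
Require Import Defs.
From HB Require Import structures.
From mathcomp Require Import all_boot all_order all_algebra.
From mathcomp Require Import all_classical all_reals all_analysis measurable_realfun.
Import Order.TTheory GRing.Theory Num.Theory.
Import numFieldNormedType.Exports.
Local Open Scope classical_set_scope.
Local Open Scope ring_scope.

Section aux2.
Context {R : realType} {E : pmetricType R}.

Lemma cont_meas (g : E -> R) : continuous g ->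
  measurable_fun [set: borelE E] (g : borelE E -> R).
Proof.
move=> /continuousP cg; apply: (measurability _ (RGenOpens.measurableE R)).
move=> _ [_ [a [b ->]] <-]; rewrite setTI.
by apply: sub_sigma_algebra; apply: cg; exact: interval_open.
Qed.
End aux2.

Section aux.
Context {R : realType} {dO : measure_display} {Omega : measurableType dO}.
Variable F : R -> set (set Omega).

Lemma st_min (tau : Omega -> \bar R) (T : R) : filtration F -> stopping_time F tau -> 0 <= T ->
  stopping_time F (fun w => Order.min (tau w) T%:E).
Proof.
move=> [sF _ _] [t0 tF] T0; split.
  by move=> w; rewrite le_min t0 lee_fin T0.
move=> t t0'.
have [Tt|tT] := leP T t.
  have -> : [set w | (Order.min (tau w) T%:E <= t%:E)%E] = setT.
    by apply/seteqP; split => // w _; rewrite /= ge_min lee_fin Tt orbT.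
  have [F0 FC _] := sF t t0'.
  by have := FC _ F0; rewrite setD0.
have -> : [set w | (Order.min (tau w) T%:E <= t%:E)%E] = [set w | (tau w <= t%:E)%E].
  by apply/seteqP; split => w /=; rewrite ge_min lee_fin (leNgt T) tT orbF.
exact: tF.
Qed.

Lemma st_fine_meas (sigma : Omega -> \bar R) (T : R) : filtration F -> stopping_time F sigma ->
  (forall w, (sigma w <= T%:E)%E) -> measurable_fun setT (fun w => fine (sigma w)).
Proof.
move=> [_ Fm _] [s0 sF] sT.
have sfin w : sigma w = (fine (sigma w))%:E.
  rewrite fineK // ge0_fin_numE //; exact: (le_lt_trans (sT w) (ltry _)).
have mle t : measurable [set w | (sigma w <= t%:E)%E].
  have [t0|t0] := leP 0 t; first exact/Fm/sF.
  suff -> : [set w | (sigma w <= t%:E)%E] = set0 by [].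
  apply/seteqP; split => // w /= h.
  by have := le_trans (s0 w) h; rewrite lee_fin leNgt t0.
apply: (measurability _ (RGenInftyO.measurableE R)).
move=> _ [_ [r ->] <-]; rewrite setTI.
have -> : (fun w => fine (sigma w)) @^-1` `]-oo, r[ =
    \bigcup_n [set w | (sigma w <= (r - n.+1%:R^-1)%:E)%E].
  apply/seteqP; split => w /=.
    rewrite in_itv /= => /ltr_add_invr [k hk]; exists k => //=.
    by rewrite sfin lee_fin lerBrDr ltW.
  move=> [k _]; rewrite /= sfin lee_fin in_itv /= => h.
  apply: (le_lt_trans h); rewrite ltrBlDr ltrDl invr_gt0; exact: ltr0Sn.
by apply: bigcupT_measurable => k; exact: mle.
Qed.
End aux.

Section integ.
Context d (T : measurableType d) (R : realType) (mu : {measure set T -> \bar R}).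
Local Open Scope ereal_scope.

Lemma bnd_int (A : set T) (g : T -> \bar R) (C : R) : measurable A -> mu A < +oo ->
  measurable_fun A g -> (0 <= C)%R -> (forall x, A x -> `|g x| <= C%:E) ->
  mu.-integrable A g.
Proof.
move=> mA muA mg C0 gC; apply/integrableP; split => //.
have h1 : \int[mu]_(x in A) `|g x| <= \int[mu]_(x in A) (cst C%:E) x.
  apply: ge0_le_integral => //; first exact: measurableT_comp.
have h2 : \int[mu]_(x in A) (cst C%:E) x < +oo.
  by rewrite (integral_cst _ mA); apply: lte_mul_pinfty; rewrite ?lee_fin.
exact: le_lt_trans h1 h2.
Qed.

Lemma fin_integral_integrable (D : set T) (f : T -> \bar R) : measurable D ->
  measurable_fun D f -> \int[mu]_(x in D) f x \is a fin_num -> mu.-integrable D f.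
Proof.
move=> mD mf; rewrite integralE fin_numB => /andP[h1 h2].
apply/integrableP; split => //.
rewrite -[fun x => _]/(abse \o f) fune_abse ge0_integralD //; last 2 first.
- exact: measurable_funepos.
- exact: measurable_funeneg.
by apply: lte_add_pinfty; rewrite -ge0_fin_numE // integral_ge0.
Qed.
Lemma int_cst' (D : set T) (r : \bar R) : measurable D ->
  \int[mu]_(x in D) r = r * mu D.
Proof. move=> mD; exact: integral_cst. Qed.
End integ.
Arguments bnd_int {d T R mu A g} C.

Section fub.
Context {R : realType} {E : pmetricType R}.
Context {dO : measure_display} {Omega : measurableType dO}.
Variable (X : R -> Omega -> E).
Hypothesis mX : measurable_fun [set p : R * Omega | 0 <= p.1]
        (fun p : R * Omega => (X p.1 p.2 : borelE E)).

Let D := [set p : R * Omega | 0 <= p.1].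
Lemma mD : measurable D.
Proof.
have -> : D = fst @^-1` `[0, +oo[%classic.
  apply/seteqP; split => p /=; rewrite /D /= in_itv /= andbT //.
rewrite -[X in measurable X]setTI.
by apply: measurable_fst => //; exact: measurable_itv.
Qed.

Lemma meas_A (g : E -> R) (s : Omega -> R) :
  measurable_fun [set: borelE E] (g : borelE E -> R) ->
  measurable_fun setT s ->
  measurable_fun setT (fun w => (\int[lebesgue_measure]_(t in `[0%R, s w]) (g (X t w))%:E)%E).
Proof.
move=> mg ms.
pose D' := [set p : R * Omega | 0 <= p.1 /\ p.1 <= s p.2].
pose H := fun p : R * Omega => (g (X p.1 p.2))%:E.
pose K := H \_ D'.
have mD' : measurable D'.
  have -> : D' = D `&` ((fun p : R * Omega => p.1 - s p.2) @^-1` `]-oo, 0]%classic).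
    apply/seteqP; split => p /=; rewrite in_itv /= subr_le0 //.
  apply: measurableI; first exact: mD.
  rewrite -[X in measurable X]setTI.
  apply: measurable_funB; [exact: measurable_fst| |exact: measurableT|exact: measurable_itv].
  exact: measurableT_comp ms measurable_snd.
have mH : measurable_fun D H.
  apply/measurable_EFinP; exact: measurableT_comp mg mX.
have mK : measurable_fun setT K.
  have sD : D' `<=` D by move=> p [].
  have h1 : measurable_fun (setT `&` D') H.
    by rewrite setTI; exact: (measurable_funS mD sD mH).
  exact: (measurable_restrict H mD' measurableT).1 h1.
have eK w : (\int[lebesgue_measure]_(t in `[0%R, s w]) (g (X t w))%:E =
    fubini_G lebesgue_measure K^\+ w - fubini_G lebesgue_measure K^\- w)%E.
  rewrite integral_mkcond.
  have -> : ((fun t => (g (X t w))%:E) \_ `[0%R, s w]) = (fun t => K (t, w)).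
    apply/funext => t; rewrite /K /patch.
    have -> : (t \in `[0%R, s w]%classic) = ((t, w) \in D') => //.
    apply/idP/idP => /set_mem h; apply/mem_set; move: h; rewrite /D' /= in_itv /=.
      by move=> /andP.
    by move=> [h1 h2]; apply/andP.
  rewrite integralE /fubini_G; congr (_ - _)%E.
    by apply: eq_integral => t _; rewrite !funeposE.
  by apply: eq_integral => t _; rewrite !funenegE.
apply: (eq_measurable_fun (fubini_G lebesgue_measure K^\+ \- fubini_G lebesgue_measure K^\-)%E).
  by move=> w _; rewrite eK.
apply: emeasurable_funB.
  apply: measurable_fun_fubini_tonelli_G.
    exact: measurable_funepos.
  by move=> ?; exact: funepos_ge0.
apply: measurable_fun_fubini_tonelli_G.
  exact: measurable_funeneg.
by move=> ?; exact: funeneg_ge0.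
Qed.
End fub.

Section core.
Context {R : realType} {E : pmetricType R}.
Context {dO : measure_display} {Omega : measurableType dO}.
Variables (F : R -> set (set Omega)) (P : E -> probability Omega R)
  (X : R -> Omega -> E) (Pt : R -> E -> probability (borelE E) R)
  (mu : probability (borelE E) R) (f : E -> R).
Hypothesis hF : filtration F.
Hypothesis mX : measurable_fun [set p : R * Omega | 0 <= p.1]
        (fun p : R * Omega => (X p.1 p.2 : borelE E)).
Hypothesis hf : Cb f.
Hypothesis hq : zero_potential_facts F P X Pt mu f.

Let m := mean mu f.
Let q := zero_potential Pt mu f.

Lemma lebI (r : R) : 0 <= r -> lebesgue_measure `[0%R, r]%classic = r%:E.
Proof.
move=> r0; rewrite lebesgue_measure_itv /= lte_fin; case: ifPn => [_|].
  by rewrite -EFinD subr0.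
by rewrite -leNgt => h; have -> : r = 0 by apply/le_anti/andP.
Qed.

Lemma mXsec (w : Omega) (r : R) :
  measurable_fun `[0%R, r]%classic (fun t => (X t w : borelE E)).
Proof.
have -> : (fun t => (X t w : borelE E)) = (fun p : R * Omega => (X p.1 p.2 : borelE E)) \o (pair^~ w) by [].
apply: (measurable_comp mD) => //.
  by move=> _ [t ht <-]; move: ht; rewrite /= in_itv /= => /andP[].
exact: measurable_funTS (pair2_measurable w).
Qed.


Lemma core (x : E) (tau : Omega -> \bar R) (T c : R) :
  stopping_time F tau -> 0 <= T ->
  (\int[P x]_w (\int[lebesgue_measure]_(t in `[0%R, stopT tau T w])
       (f (X t w) - c)%:E))%E
  = ((q x)%:E + \int[P x]_w (((m - c) * stopT tau T w
        - q (X (stopT tau T w) w))%:E))%E.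
Proof.
move=> htau T0.
pose sg := fun w => Order.min (tau w) T%:E.
have hsg : stopping_time F sg := st_min _ _ _ hF htau T0.
have sgT w : (sg w <= T%:E)%E by rewrite /sg ge_min lexx orbT.
set s := stopT tau T.
have ms : measurable_fun setT s := st_fine_meas _ _ _ hF hsg sgT.
have s0 w : 0 <= s w := fine_ge0 (hsg.1 w).
have sgE w : sg w = (s w)%:E.
  by rewrite fineK // ge0_fin_numE ?(hsg.1 w) // (le_lt_trans (sgT w) (ltry _)).
have sT w : s w <= T by have := sgT w; rewrite sgE lee_fin.
have [Mf hMf] := hf.2.
have Mf0 : 0 <= Mf by apply: le_trans (hMf point); exact: normr_ge0.
have [hqc hqe] := hq.
pose A := fun w => (\int[lebesgue_measure]_(t in `[0%R, s w]) (f (X t w) - m)%:E)%E.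
have eq1 : (q x)%:E = (\int[P x]_w (A w + (q (X (s w) w))%:E))%E.
  exact: (hqe x sg hsg (ex_intro _ T sgT)).
have mgf : measurable_fun [set: borelE E] (f : borelE E -> R) := cont_meas _ hf.1.
have mqc : measurable_fun [set: borelE E] (q : borelE E -> R) := cont_meas _ hqc.
have mXs : measurable_fun setT (fun w => (X (s w) w : borelE E)).
  have -> : (fun w => (X (s w) w : borelE E)) =
     (fun p : R * Omega => (X p.1 p.2 : borelE E)) \o (fun w => (s w, w)) by [].
  apply: (measurable_comp mD) => //.
    by move=> _ [w _ <-]; exact: s0.
  by apply: measurable_fun_pair.
have mqX : measurable_fun setT (fun w => q (X (s w) w)) := measurableT_comp mqc mXs.
have bnd (a : R) y : `|f y - a| <= Mf + `|a|.
  by rewrite (le_trans (ler_normD _ _)) // normrN; apply: lerD.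
have mgm : measurable_fun [set: borelE E] ((fun y => f y - m) : borelE E -> R).
  exact: measurable_funB mgf (measurable_cst m).
have mA : measurable_fun setT A := meas_A X mX _ s mgm ms.
have msec (a : R) w : measurable_fun `[0%R, s w]%classic (fun t => (f (X t w) - a)%:E).
  apply/measurable_EFinP.
  have mga : measurable_fun [set: borelE E] ((fun y => f y - a) : borelE E -> R).
    exact: measurable_funB mgf (measurable_cst a).
  exact: (measurableT_comp mga (mXsec w (s w))).
have lebfin w : (lebesgue_measure `[0%R, s w]%classic < +oo)%E by rewrite lebI // ltry.
have Abnd w : (`|A w| <= ((Mf + `|m|) * T)%:E)%E.
  rewrite /A; apply: le_trans (le_abse_integral lebesgue_measure (measurable_itv _) (msec m w)) _.
  apply: (@le_trans _ _ (\int[lebesgue_measure]_(t in `[0%R, s w]) (cst (Mf + `|m|)%:E) t)%E).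
    apply: ge0_le_integral => //; first exact: measurableT_comp (msec m w).
    by move=> t _; rewrite /= lee_fin bnd.
  rewrite integral_cst // [X in (_ * X <= _)%E]lebI // lee_fin ler_wpM2l //.
  by rewrite addr_ge0.
have Afin w : A w \is a fin_num.
  by rewrite -abse_fin_num ge0_fin_numE // (le_lt_trans (Abnd w)) // ltry.
have inner w : (\int[lebesgue_measure]_(t in `[0%R, s w]) (f (X t w) - c)%:E
     = A w + ((m - c) * s w)%:E)%E.
  have eqfm t : (f (X t w) - c)%:E = ((f (X t w) - m)%:E + (m - c)%:E)%E.
    by rewrite -EFinD addrA subrK.
  under eq_integral => t _ do rewrite eqfm.
  rewrite integralD //; last 2 first.
  - apply: (bnd_int (Mf + `|m|)) => //.
    + exact: lebfin.
    + exact: msec.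
    + by rewrite addr_ge0.
    + by move=> t _; rewrite /= lee_fin bnd.
  - apply: (bnd_int `|m - c|) => //; exact: lebfin.
  rewrite int_cst' // [X in (_ * X)%E]lebI // -EFinM //.
have mU : measurable_fun setT (fun w => A w + (q (X (s w) w))%:E)%E.
  by apply: emeasurable_funD => //; apply/measurable_EFinP.
have iU : (P x).-integrable setT (fun w => A w + (q (X (s w) w))%:E)%E.
  by apply: fin_integral_integrable => //; rewrite -eq1.
have Pfin : (P x setT < +oo)%E by rewrite probability_setT ltry.
have iA : (P x).-integrable setT A.
  apply: (bnd_int ((Mf + `|m|) * T)) => //.
  by rewrite mulr_ge0 // addr_ge0.
have iQ : (P x).-integrable setT (fun w => (q (X (s w) w))%:E).
  apply: (eq_integrable _ (fun w => (A w + (q (X (s w) w))%:E) - A w)%E) => //.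
    by move=> w _; rewrite [X in (X - _)%E]addeC addeK.
  exact: integrableB.
have iV : (P x).-integrable setT (fun w => ((m - c) * s w - q (X (s w) w))%:E).
  apply: (eq_integrable _ (fun w => ((m - c) * s w)%:E - (q (X (s w) w))%:E)%E) => //.
  apply: integrableB => //.
  apply: (bnd_int (`|m - c| * T)) => //.
  - apply/measurable_EFinP; exact: measurable_funM (measurable_cst (m - c)) ms.
  - by rewrite mulr_ge0.
  - by move=> w _; rewrite /= lee_fin normrM ler_wpM2l // ger0_norm.
have eqAV w : (A w + ((m - c) * s w)%:E = (A w + (q (X (s w) w))%:E)
    + ((m - c) * s w - q (X (s w) w))%:E)%E.
  by rewrite -addeA -EFinD subrKC.
under eq_integral => w _ do rewrite inner eqAV.
by rewrite integralD // -eq1.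
Qed.

End core.

Lemma inf_shift {R : realType} (S : set R) (J : R -> \bar R) (a : R) :
  (ereal_inf ((fun T => a%:E + J T) @` S) <= a%:E + ereal_inf (J @` S))%E.
Proof.
rewrite -leeBlDl //; apply: le_ereal_inf_tmp => _ [T hT <-].
by rewrite leeBlDl //; apply: ereal_inf_lbound; exists T.
Qed.

Theorem mainTheorem10 (R : realType) (E : pmetricType R)
  (dO : measure_display) (Omega : measurableType dO)
  (F : R -> set (set Omega)) (P : E -> probability Omega R)
  (X : R -> Omega -> E) (Pt : R -> E -> probability (borelE E) R)
  (mu : probability (borelE E) R) (K : E -> R) (h : R -> R)
  (f : E -> R) (delta : R) :
  locally_compact [set: E] ->
  markov_process F P X Pt ->
  weak_feller Pt ->
  A2 P X Pt mu K h ->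
  Cb f ->
  zero_potential_facts F P X Pt mu f ->
  mean mu f < 0 ->
  0 < delta <= 1 ->
  (forall x, (gamma_bar F P X Pt mu f delta x < +oo)%E) ->
  forall x, (gamma F P X f (delta * mean mu f) x < +oo)%E.
Proof.
move=> _ [hF [_ [mX _]]] _ _ hf hq _ _ hbar x.
set m := mean mu f; set q := zero_potential Pt mu f.
suff H : (gamma F P X f (delta * m) x <= (q x)%:E + gamma_bar F P X Pt mu f delta x)%E.
  by apply: le_lt_trans H _; apply: lte_add_pinfty => //; exact: ltry.
apply: ge_ereal_sup => _ [tau htau <-].
set I := fun T : R => _.
set J := fun T : R => (\int[P x]_w
          ((1 - delta) * mean mu f * stopT tau T w
             - zero_potential Pt mu f (X (stopT tau T w) w))%:E)%E.
have IJ T : 0 <= T -> I T = ((q x)%:E + J T)%E.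
  move=> T0; rewrite /I (core _ _ _ _ _ _ hF mX hf hq x tau T (delta * m) htau T0) /J.
  congr (_ + _)%E; apply: eq_integral => w _.
  by rewrite /m [(1 - delta) * _]mulrBl mul1r.
have Jle : (limf_einf J (pinfty_nbhs R) <= gamma_bar F P X Pt mu f delta x)%E.
  by apply: ereal_sup_ubound; exists tau.
rewrite [X in (X <= _)%E]limf_einfE; apply: ge_ereal_sup => _ [V hV <-].
have hV' : pinfty_nbhs R (V `&` [set T | 0 <= T]).
  case: hV => M [Mr hM]; exists (Num.max M 0); split; first exact: num_real.
  by move=> T; rewrite gt_max => /andP[h1 h2]; split; [exact: hM|exact: ltW].
apply: (@le_trans _ _ (ereal_inf (I @` (V `&` [set T | 0 <= T])))).
  by apply: le_ereal_inf => _ [T [hT _] <-]; exists T.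
have -> : I @` (V `&` [set T | 0 <= T]) = (fun T => (q x)%:E + J T)%E @` (V `&` [set T | 0 <= T]).
  by apply: eq_imagel => T [_ T0]; exact: IJ.
apply: le_trans (inf_shift _ _ _) _.
apply: leeD2l; apply: le_trans Jle.
rewrite limf_einfE; apply: ereal_sup_ubound.
by exists (V `&` [set T | 0 <= T]).
Qed.
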